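(* Let $R$ be a commutative multiplicative hyperring with identity, let $\alpha$ be a good endomorphism of $R$, and let $I$ be a hyperideal of $R$. Then the following are equivalent: - $I$ is $\alpha$-prime; - for all hyperideals $I_1,I_2$ of $R$, $I_1\circ I_2\subseteq I$ implies $I_1\subseteq I$ or $\alpha(I_2)\subseteq I$.
   Context: A multiplicative hyperring is an abelian group $(R,+)$ with a hyperoperation $\circ:R\times R\to \mathcal P^*(R)$ (nonempty subsets) such that $a\circ(b\circ c)=(a\circ b)\circ c$, $a\circ(b+c)\subseteq a\circ b+a\circ c$, $(b+c)\circ a\subseteq b\circ a+c\circ a$, and $a\circ(-b)=(-a)\circ b=-(a\circ b)$. Products of subsets are unions of elementwise products; in particular $I_1\circ I_2=\bigcup_{a\in I_1,b\in I_2}a\circ b$. Commutative means $a\circ b=b\circ a$. An identity $1$ satisfies $a\in 1\circ a$ for all $a$. A hyperideal is a nonempty $I\subseteq R$ closed under subtraction with $r\circ x\subseteq I$ for $r\in R$, $x\in I$. Standing assumption: every hyperideal is a $\mathbf C$-hyperideal, i.e. for every finite product $A=r_1\circ\cdots\circ r_n$, $A\cap I\ne\emptyset$ implies $A\subseteq I$. A good endomorphism $\alpha$ satisfies $\alpha(x+y)=\alpha(x)+\alpha(y)$ and $\alpha(x\circ y)=\alpha(x)\circ\alpha(y)$; it is applied to sets elementwise. A hyperideal $I$ is $\alpha$-prime if for all $x,y$, $x\circ y\subseteq I$ implies $x\in I$ or $\alpha(y)\in I$. *)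

(* Defs.v *)
From mathcomp Require Import all_boot all_algebra.
Set Implicit Arguments. Unset Strict Implicit. Unset Printing Implicit Defensive.
Import GRing.Theory.
Local Open Scope ring_scope.

(* Subsets of R are predicates R -> Prop. A hyperoperation is
   hmul : R -> R -> (R -> Prop); z \in a o b  iff  hmul a b z. *)
Definition hset (R : Type) := R -> Prop.

Definition hsubset {R : Type} (A B : hset R) : Prop := forall x, A x -> B x.

Definition hprod {R : Type} (hmul : R -> R -> hset R) (A B : hset R) : hset R :=
  fun z => exists a b, A a /\ B b /\ hmul a b z.

Definition hsum {R : zmodType} (A B : hset R) : hset R :=
  fun z => exists a b, A a /\ B b /\ z = a + b.

Definition hopp {R : zmodType} (A : hset R) : hset R := fun z => A (- z).

Definition hsingle {R : Type} (a : R) : hset R := fun z => z = a.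

Definition himage {R : Type} (f : R -> R) (A : hset R) : hset R :=
  fun z => exists a, A a /\ z = f a.

Definition is_mult_hyperring (R : zmodType) (hmul : R -> R -> hset R) : Prop :=
  (forall a b, exists z, hmul a b z) /\
  (forall a b c, forall z,
      hprod hmul (hsingle a) (hmul b c) z <-> hprod hmul (hmul a b) (hsingle c) z) /\
  (forall a b c, hsubset (hmul a (b + c)) (hsum (hmul a b) (hmul a c))) /\
  (forall a b c, hsubset (hmul (b + c) a) (hsum (hmul b a) (hmul c a))) /\
  (forall a b z, hmul a (- b) z <-> hopp (hmul a b) z) /\
  (forall a b z, hmul (- a) b z <-> hopp (hmul a b) z).

Definition hcommutative {R : Type} (hmul : R -> R -> hset R) : Prop :=
  forall a b z, hmul a b z <-> hmul b a z.

Definition has_identity {R : Type} (hmul : R -> R -> hset R) (one : R) : Prop :=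
  forall a, hmul one a a.

Definition is_hyperideal {R : zmodType} (hmul : R -> R -> hset R) (I : hset R) : Prop :=
  (exists x, I x) /\
  (forall x y, I x -> I y -> I (x - y)) /\
  (forall r x, I x -> hsubset (hmul r x) I).

(* Finite product r1 o r2 o ... o rn (n >= 1), r :: rs = r1 :: [r2..rn],
   associated to the left. *)
Fixpoint fprod_aux {R : Type} (hmul : R -> R -> hset R) (acc : hset R) (rs : seq R)
  : hset R :=
  match rs with
  | [::] => acc
  | r' :: rs' => fprod_aux hmul (hprod hmul acc (hsingle r')) rs'
  end.

Definition fin_hprod {R : Type} (hmul : R -> R -> hset R) (r : R) (rs : seq R) : hset R :=
  fprod_aux hmul (hsingle r) rs.

Definition is_C_hyperideal {R : zmodType} (hmul : R -> R -> hset R) (I : hset R) : Prop :=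
  is_hyperideal hmul I /\
  forall r rs, (exists z, fin_hprod hmul r rs z /\ I z) -> hsubset (fin_hprod hmul r rs) I.

Definition good_endo {R : zmodType} (hmul : R -> R -> hset R) (alpha : R -> R) : Prop :=
  (forall x y, alpha (x + y) = alpha x + alpha y) /\
  (forall x y z, himage alpha (hmul x y) z <-> hmul (alpha x) (alpha y) z).

Definition alpha_prime {R : zmodType} (hmul : R -> R -> hset R) (alpha : R -> R)
  (I : hset R) : Prop :=
  is_hyperideal hmul I /\
  forall x y, hsubset (hmul x y) I -> I x \/ I (alpha y).

(* Main.v *)
Require Import Defs.
From mathcomp Require Import all_boot all_algebra.
From Stdlib Require Import Classical.
Import GRing.Theory.
Local Open Scope ring_scope.

Lemma hid_add (R : zmodType) (hmul : R -> R -> hset R) I :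
  is_hyperideal hmul I -> forall a b, I a -> I (- b) -> I (a + b).
Proof.
move=> [[x0 Hx0] [Hsub _]] a b Ha Hb.
by have := Hsub _ _ Ha Hb; rewrite opprK.
Qed.

Theorem mainTheorem6 (R : zmodType) (hmul : R -> R -> hset R) (one : R)
  (alpha : R -> R) (I : hset R) :
  is_mult_hyperring hmul ->
  hcommutative hmul ->
  has_identity hmul one ->
  (forall J, is_hyperideal hmul J -> is_C_hyperideal hmul J) ->
  good_endo hmul alpha ->
  is_hyperideal hmul I ->
  (alpha_prime hmul alpha I <->
   (forall I1 I2, is_hyperideal hmul I1 -> is_hyperideal hmul I2 ->
      hsubset (hprod hmul I1 I2) I ->
      hsubset I1 I \/ hsubset (himage alpha I2) I)).
Proof.
move=> [Hne [Hass [HdL [HdR [HoR HoL]]]]] Hcom _ _ _ HI.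
have HIid := HI; case: HI => [_ [_ HImul]].
split.
- move=> [_ Hp] I1 I2 _ _ Hsub.
  case: (classic (hsubset I1 I)) => [h|h]; first by left.
  right.
  have [a [Ha1 HaI]] : exists a, I1 a /\ ~ I a.
    apply: NNPP => Hn; apply: h => z Hz; apply: NNPP => Hz'; apply: Hn; by exists z.
  move=> z [b [Hb ->]].
  case: (Hp a b) => // t Ht; apply: Hsub; by exists a, b.
- move=> H; split => // x y Hxy.
  pose I1 := fun z => hsubset (hmul z y) I.
  pose I2 := fun w => forall z, I1 z -> hsubset (hmul z w) I.
  have I1mul : forall r z u, I1 z -> hmul r z u -> I1 u.
    move=> r z u Hz Hu t Ht.
    have : hprod hmul (hmul r z) (hsingle y) t by exists u, y.
    move/Hass => [a [b [-> [Hb Ht']]]].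
    exact: (HImul r b (Hz _ Hb) t Ht').
  have HI1 : is_hyperideal hmul I1.
    split; first by exists x.
    split.
    + move=> z1 z2 H1 H2 t Ht.
      have := HdR y z1 (- z2) t Ht; rewrite /hsum; move=> [p [q [Hp [Hq ->]]]].
      apply: (@hid_add _ _ _ HIid); first exact: (H1 p Hp).
      by apply: H2; apply/HoL.
    + move=> r z Hz u Hu; exact: I1mul Hu.
  have HI2 : is_hyperideal hmul I2.
    split; first by exists y.
    split.
    + move=> w1 w2 H1 H2 z Hz t Ht.
      have := HdL z w1 (- w2) t Ht; rewrite /hsum; move=> [p [q [Hp [Hq ->]]]].
      apply: (@hid_add _ _ _ HIid); first exact: (H1 z Hz p Hp).
      by apply: (H2 z) => //; apply/HoR.
    + move=> r w Hw w' Hw' z Hz t Ht.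
      have : hprod hmul (hsingle z) (hmul r w) t by exists z, w'.
      move/Hass => [u [c [Hu [-> Ht']]]].
      apply: (Hw u) => //.
      apply: (I1mul r z u Hz); exact/Hcom.
  have Hsub : hsubset (hprod hmul I1 I2) I.
    by move=> t [a [b [Ha [Hb Ht]]]]; exact: (Hb a Ha).
  case: (H I1 I2 HI1 HI2 Hsub) => [h|h].
  + by left; apply: h.
  + right; apply: h; exists y; split => //.
Qed.
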